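(* For every integer $n\ge 1$ there exists an equiangular set of at least $\frac{8}{1089}\,n(4n+33)$ lines in $\mathbb{R}^n$.
   Context: A set of lines in $\mathbb{R}^n$ spanned by unit vectors $v_1,\dots,v_r$ is equiangular if there is a constant $c$ such that $|\langle v_i,v_j\rangle|=c$ for all $1\le i<j\le r$. *)

(* Defs.v *)
(* Stdlib reals. Vectors of R^n are functions nat -> R, of which only
   coordinates 0..n-1 are meaningful. *)
From Stdlib Require Import Reals Lra Lia.
Open Scope R_scope.

Fixpoint inner (n : nat) (x y : nat -> R) : R :=
  match n with
  | O => 0
  | S m => inner m x y + x m * y m
  end.

Definition veq (n : nat) (x y : nat -> R) : Prop :=
  forall k, (k < n)%nat -> x k = y k.

Definition equiangular_lines (n r : nat) (v : nat -> nat -> R) : Prop :=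
  (forall i, (i < r)%nat -> inner n (v i) (v i) = 1) /\
  (forall i j, (i < r)%nat -> (j < r)%nat -> i <> j ->
     ~ veq n (v i) (v j) /\ ~ veq n (v i) (fun k => - v j k)) /\
  (exists c : R, forall i j, (i < r)%nat -> (j < r)%nat -> i <> j ->
     Rabs (inner n (v i) (v j)) = c).

(* Main.v *)
Require Import Defs.
From Stdlib Require Import Reals Lra Lia.
Open Scope R_scope.

Module MC.
From HB Require Import structures.
From mathcomp Require Import all_boot all_order all_algebra all_field.
From mathcomp Require Import Rstruct.
From mathcomp Require Import ring zify lra.
Set Implicit Arguments. Unset Strict Implicit. Unset Printing Implicit Defensive.
Import Order.TTheory GRing.Theory Num.Theory.
Local Open Scope ring_scope.

Section Kerdock.
Variable F : finFieldType.
Variable h : nat.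
Hypothesis charF : 2 \in [pchar F].
Hypothesis cardF : #|F| = (2 ^ h.*2.+1)%N.
Local Notation m := h.*2.+1.

Lemma two0 : (2%:R : F) = 0. Proof. exact: pcharf0 charF. Qed.
Lemma addxx (x : F) : x + x = 0.
Proof. by rewrite -mulr2n -mulr_natr two0 mulr0. Qed.
Lemma oppF (x : F) : - x = x.
Proof. by apply/eqP; rewrite eq_sym -subr_eq0 opprK addxx. Qed.
Lemma sqrD (x y : F) : (x + y) ^+ 2 = x ^+ 2 + y ^+ 2.
Proof. by rewrite sqrrD -mulr_natr two0 mulr0 addr0. Qed.
Lemma frobD k (x y : F) : (x + y) ^+ (2 ^ k) = x ^+ (2 ^ k) + y ^+ (2 ^ k).
Proof.
elim: k => [|k IH]; first by rewrite !expr1.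
by rewrite expnSr !exprM IH sqrD.
Qed.
Lemma frob0 k : (0 : F) ^+ (2 ^ k) = 0.
Proof. by rewrite expr0n expn_eq0. Qed.
Lemma frob_sum k (I : finType) (g : I -> F) :
  (\sum_i g i) ^+ (2 ^ k) = \sum_i (g i) ^+ (2 ^ k).
Proof. exact: (big_morph _ (frobD k) (frob0 k)). Qed.
Lemma xcard (x : F) : x ^+ (2 ^ m) = x.
Proof. by rewrite -cardF expf_card. Qed.

Definition Tr (x : F) : F := \sum_(i < m) x ^+ (2 ^ i).

Lemma TrD x y : Tr (x + y) = Tr x + Tr y.
Proof. by rewrite /Tr -big_split; apply: eq_bigr => i _; rewrite frobD. Qed.
Lemma Tr0 : Tr 0 = 0.
Proof. by rewrite /Tr big1 // => i _; rewrite frob0. Qed.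
Lemma Tr_sq x : Tr (x ^+ 2) = Tr x.
Proof.
rewrite /Tr; under eq_bigr => i _ do rewrite -exprM -expnS.
rewrite big_ord_recr /= xcard big_ord_recl /= expr1.
by rewrite addrC; congr (_ + _); apply: eq_bigr => i _.
Qed.
Lemma Tr_bit x : Tr x ^+ 2 = Tr x.
Proof. rewrite -{2}Tr_sq /Tr (frob_sum 1) expn1; apply: eq_bigr => i _; exact: exprAC. Qed.
Lemma Tr_frob k x : Tr (x ^+ (2 ^ k)) = Tr x.
Proof. elim: k => [|k IH]; first by rewrite expr1. by rewrite expnSr exprM Tr_sq. Qed.
Lemma natF_odd k : (k.*2.+1)%:R = 1 :> F.
Proof. by rewrite -addn1 natrD -muln2 natrM two0 mulr0 add0r. Qed.
Lemma Tr1 : Tr 1 = 1.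
Proof. by rewrite /Tr (eq_bigr (fun _ => 1)) ?sumr_const ?card_ord ?natF_odd // => i _; rewrite expr1n. Qed.

Definition bit (t : F) := t ^+ 2 == t.
Lemma bitP t : bit t -> t = 0 \/ t = 1.
Proof.
move=> /eqP H; have: t * (t - 1) = 0 by rewrite mulrBr mulr1 -expr2 H subrr.
by move/eqP; rewrite mulf_eq0 subr_eq0 => /orP[/eqP|/eqP]; auto.
Qed.
Lemma bit0 : bit 0. Proof. by rewrite /bit expr0n. Qed.
Lemma bit1 : bit 1. Proof. by rewrite /bit expr1n. Qed.
Lemma bitD a b : bit a -> bit b -> bit (a + b).
Proof. by rewrite /bit sqrD => /eqP-> /eqP->. Qed.
Lemma bitM a b : bit a -> bit b -> bit (a * b).
Proof. by rewrite /bit exprMn => /eqP-> /eqP->. Qed.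
Lemma bitTr x : bit (Tr x). Proof. by rewrite /bit Tr_bit. Qed.
Lemma TrZ t x : bit t -> Tr (t * x) = t * Tr x.
Proof. by case/bitP => ->; rewrite ?mul0r ?Tr0 ?mul1r. Qed.
Lemma one_neq0 : (1 : F) != 0. Proof. exact: oner_neq0. Qed.

Lemma TrS (I : finType) (g : I -> F) : Tr (\sum_i g i) = \sum_i Tr (g i).
Proof. exact: (big_morph _ TrD Tr0). Qed.

Definition P (u : F) : F := \sum_(i < h) Tr (u ^+ (2 ^ i.+1).+1).

Lemma key_sum u w :
  \sum_(i < h) Tr (u ^+ (2 ^ i.+1) * w) + \sum_(i < h) Tr (w ^+ (2 ^ i.+1) * u)
  = Tr u * Tr w + Tr (u * w).
Proof.
pose g j := Tr (u ^+ (2 ^ j) * w).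
have Hall : \sum_(j < m) g j = Tr u * Tr w.
  rewrite /g -TrS -mulr_suml; exact: (TrZ w (bitTr u)).
have H2 : forall i : 'I_h, Tr (w ^+ (2 ^ i.+1) * u) = g (h + h - i)%N.
  move=> i; rewrite /g -[RHS](Tr_frob i.+1) exprMn -exprM -expnD.
  have -> : (h + h - i + i.+1 = m)%N.
    by have := ltn_ord i; rewrite -addnn; lia.
  by rewrite xcard mulrC.
rewrite (eq_bigr _ (fun i _ => H2 i)).
have E2 : \sum_(i < h) g (h + h - i)%N = \sum_(i < h) g (h + i).+1.
  rewrite (reindex_inj rev_ord_inj) /=; apply: eq_bigr => i _; congr g.
  by have := ltn_ord i; lia.
rewrite E2 -Hall big_ord_recl -addnn big_split_ord /= /g expr1.
by rewrite [RHS]addrC addrA addxx add0r.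
Qed.

Lemma polarP u w : P (u + w) = P u + P w + (Tr u * Tr w + Tr (u * w)).
Proof.
rewrite -key_sum /P -!big_split /=; apply: eq_bigr => i _.
rewrite !exprSr frobD mulrDl !mulrDr !TrD.
rewrite [w ^+ _ * u]mulrC; ring.
Qed.

Local Notation V := (F * bool)%type.
Definition eb (e : bool) : F := if e then 1 else 0.
Definition addV (v u : V) : V := (v.1 + u.1, v.2 (+) u.2).
Definition zV : V := (0, false).
Definition L (w v : V) : F := Tr (v.1 * w.1) + eb v.2 * eb w.2.
Definition Q (l : F) (v : V) : F := P (l * v.1) + eb v.2 * Tr (l * v.1).
Definition Bq (l : F) (v u : V) : F :=
  Tr (l ^+ 2 * v.1 * u.1) + Tr (l * v.1) * Tr (l * u.1)
  + eb v.2 * Tr (l * u.1) + eb u.2 * Tr (l * v.1).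

Lemma eb_xor a b : eb (a (+) b) = eb a + eb b.
Proof. by case: a; case: b; rewrite /= ?addr0 ?add0r ?addxx. Qed.
Lemma bit_eb e : bit (eb e). Proof. case: e; [exact: bit1 | exact: bit0]. Qed.

Lemma QpolarP l v u : Q l (addV v u) = Q l v + Q l u + Bq l v u.
Proof.
case: v => x e; case: u => y d; rewrite /Q /Bq /addV /= eb_xor mulrDr polarP TrD.
have -> : l ^+ 2 * x * y = l * x * (l * y) by ring.
ring.
Qed.

Lemma LpolarP w v u : L w (addV v u) = L w v + L w u.
Proof. case: v => x e; case: u => y d; rewrite /L /addV /= eb_xor mulrDl TrD; ring. Qed.
Lemma LaddP w w' v : L w v + L w' v = L (addV w w') v.
Proof. case: w => x e; case: w' => y d; rewrite /L /addV /= eb_xor mulrDr TrD; ring. Qed.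

Lemma bitQ l v : bit (Q l v).
Proof. rewrite /Q /P; apply: bitD; last by apply: bitM; [exact: bit_eb|exact: bitTr].
by elim/big_rec: _ => [|i x _ Hx]; [exact: bit0 | exact: (bitD (bitTr _) Hx)]. Qed.
Lemma bitL w v : bit (L w v).
Proof. by rewrite /L; apply: bitD; [exact: bitTr| apply: bitM; exact: bit_eb]. Qed.
Lemma bitBq l v u : bit (Bq l v u).
Proof. rewrite /Bq; repeat apply: bitD; repeat apply: bitM; (exact: bitTr || exact: bit_eb). Qed.

Lemma BqD l v v' u : Bq l (addV v v') u = Bq l v u + Bq l v' u.
Proof. case: v => x e; case: v' => y d; case: u => z c.
rewrite /Bq /addV /= eb_xor !mulrDr !mulrDl !TrD; ring. Qed.
Lemma Bqz l v : Bq l v zV = 0.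
Proof. case: v => x e; rewrite /Bq /zV /= !mulr0 Tr0; ring. Qed.

Lemma radical l mu u : l != mu -> (forall v, Bq l v u + Bq mu v u = 0) -> u = zV.
Proof.
case: u => y d /= lmu H.
set nu := l + mu.
have nu0 : nu != 0.
  apply: contra lmu; rewrite /nu addr_eq0 oppF; exact: id.
have H1 := H (0, true); rewrite /Bq /= !(mulr0, mul0r, Tr0, mul1r, add0r, addr0) in H1.
have Ha : Tr (mu * y) = Tr (l * y).
  by apply/eqP; rewrite -subr_eq0 oppF addrC H1.
set a := Tr (l * y).
set c := nu ^+ 2 * y + (a + eb d) * nu.
have Hc : forall x, Tr (x * c) = 0.
  move=> x; have := H (x, false); rewrite /Bq /= !mul0r !addr0 Ha -/a => <-.
  rewrite /c /nu sqrD.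
  have -> : x * ((l ^+ 2 + mu ^+ 2) * y + (a + eb d) * (l + mu)) =
    l ^+ 2 * x * y + mu ^+ 2 * x * y + a * (l * x) + a * (mu * x)
    + eb d * (l * x) + eb d * (mu * x) by ring.
  rewrite !TrD (TrZ (l * x) (bitTr (l * y))) (TrZ (mu * x) (bitTr (l * y))) (TrZ (l * x) (bit_eb d)) (TrZ (mu * x) (bit_eb d)); rewrite /a; ring.
have c0 : c = 0.
  apply/eqP/negPn/negP => cn0; have := Hc c^-1; rewrite mulVf // Tr1 => /eqP.
  by rewrite oner_eq0.
have Hny : nu * y = a + eb d.
  apply: (mulfI nu0); move: c0; rewrite /c => /eqP; rewrite addr_eq0 oppF => /eqP.
  by rewrite expr2 -mulrA => ->; rewrite mulrC.
have Ht : Tr (nu * y) = 0 by rewrite /nu mulrDl TrD -/a Ha addxx.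
rewrite Hny -[a + eb d]mulr1 TrZ ?bitD ?bit_eb ?bitTr // Tr1 mulr1 in Ht.
move: Hny; rewrite Ht => /eqP; rewrite mulf_eq0 (negbTE nu0) /= => /eqP y0.
move: Ht; rewrite /a y0 mulr0 Tr0 add0r => Hd.
by move: Hd; case: (d) => //= /eqP; rewrite oner_eq0.
Qed.

Lemma addV_invol v u : addV (addV v u) u = v.
Proof. by case: v => x e; case: u => y d; rewrite /addV /= -addrA addxx addr0 addbK. Qed.
Lemma addVC v u : addV v u = addV u v.
Proof. by rewrite /addV addrC addbC. Qed.
Lemma addV_inj u : injective (addV ^~ u).
Proof. by move=> a b E; rewrite -(addV_invol a u) E addV_invol. Qed.
Lemma addV_injl v : injective (addV v).
Proof. by move=> a b E; move: (addV_inj (u:=v)); apply; rewrite !(addVC _ v). Qed.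

Local Notation RR := Rdefinitions.R.
Definition chi (t : F) : RR := if t == 0 then 1 else -1.
Lemma chiD a b : bit a -> bit b -> chi (a + b) = chi a * chi b.
Proof.
case/bitP=> ->; case/bitP=> ->; rewrite /chi ?addr0 ?add0r ?addxx ?eqxx ?oner_eq0 /=;
  by rewrite ?mul1r ?mulr1 ?mulrNN ?mulr1.
Qed.
Lemma chi0 : chi 0 = 1. Proof. by rewrite /chi eqxx. Qed.
Lemma chi1 : chi 1 = -1. Proof. by rewrite /chi oner_eq0. Qed.

Lemma orth (l : V -> F) v0 : (forall v, bit (l v)) ->
  (forall v, l (addV v v0) = l v + l v0) -> l v0 = 1 -> \sum_v chi (l v) = 0.
Proof.
move=> bl ladd l1.
have E : \sum_v chi (l v) = - \sum_v chi (l v).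
  rewrite {1}(reindex_inj (addV_inj (u:=v0))) /= -sumrN; apply: eq_bigr => v _.
  by rewrite ladd l1 chiD ?bit1 // chi1 mulrN1.
lra.
Qed.

Lemma gauss (f : V -> F) (B : V -> V -> F) :
  (forall v, bit (f v)) -> (forall v u, bit (B v u)) ->
  (forall v u, f (addV v u) = f v + f u + B v u) ->
  (forall v v' u, B (addV v v') u = B v u + B v' u) ->
  (forall v, B v zV = 0) -> f zV = 0 ->
  (forall u, u != zV -> exists v0, B v0 u = 1) ->
  (\sum_v chi (f v)) ^+ 2 = #|{: V}|%:R.
Proof.
move=> bf bB fpol BD Bz fz nd.
rewrite expr2 mulr_suml.
have E1 : forall v, chi (f v) * \sum_w chi (f w) = \sum_u chi (f u) * chi (B v u).
  move=> v; rewrite mulr_sumr (reindex_inj (addV_injl (v:=v))) /=.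
  apply: eq_bigr => u _; rewrite -chiD // fpol.
  have -> : f v + (f v + f u + B v u) = f u + B v u by rewrite !addrA addxx add0r.
  by rewrite chiD.
rewrite (eq_bigr _ (fun v _ => E1 v)) exchange_big /=.
rewrite (bigD1 zV) //= [X in _ + X]big1 ?addr0.
  rewrite fz chi0 (eq_bigr (fun _ => 1)) ?sumr_const //.
  by move=> v _; rewrite Bz chi0 mulr1.
move=> u uz; rewrite -mulr_sumr; have [v0 Hv0] := nd u uz.
by rewrite (orth (v0 := v0)) ?mulr0 // => v; rewrite BD.
Qed.

Lemma cardV : #|{: V}| = (2 ^ h.+1 * 2 ^ h.+1)%N.
Proof. by rewrite card_prod card_bool cardF -!expnD -expnSr; congr (2 ^ _)%N; lia. Qed.

Definition cc : RR := ((2 ^ h.+1)%:R)^-1.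
Lemma cc2 : cc * cc * #|{: V}|%:R = 1.
Proof.
rewrite cardV natrM /cc; have H : (2 ^ h.+1)%:R != 0 :> RR by rewrite pnatr_eq0 expn_eq0.
rewrite mulrACA. by rewrite mulVr ?unitfE // mul1r.
Qed.

Lemma bitQL l w v : bit (Q l v + L w v).
Proof. by apply: bitD; [exact: bitQ | exact: bitL]. Qed.

Definition U l w v : RR := cc * chi (Q l v + L w v).

Lemma P0 : P 0 = 0.
Proof. by rewrite /P big1 // => i _; rewrite expr0n /= Tr0. Qed.
Lemma QzV l : Q l zV = 0.
Proof. by rewrite /Q /zV /= mulr0 P0 Tr0 mul0r addr0. Qed.
Lemma LzV w : L w zV = 0.
Proof. by rewrite /L /zV /= mul0r Tr0 mul0r addr0. Qed.
Lemma LzV' v : L zV v = 0.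
Proof. by rewrite /L /zV /= mulr0 Tr0 mulr0 addr0. Qed.

Lemma O1 l w w' : \sum_v U l w v * U l w' v = (w == w')%:R.
Proof.
have EE : forall v, U l w v * U l w' v = cc * cc * chi (L (addV w w') v).
  move=> v; rewrite /U mulrACA -chiD ?bitQL //.
  congr (_ * chi _); rewrite -LaddP.
  by rewrite addrACA addxx add0r.
rewrite (eq_bigr _ (fun v _ => EE v)) -mulr_sumr; clear EE.
case: (eqVneq w w') => [<-|ne].
  have -> : addV w w = zV by case: w => x e; rewrite /addV /zV /= addxx addbb.
  by rewrite (eq_bigr (fun _ => 1)) ?sumr_const ?cc2 // => v _; rewrite LzV' chi0.
have nz : addV w w' != zV.
  apply: contra ne => /eqP E0; apply/eqP.
  by rewrite -[w'](addV_invol w' w) [addV w' w]addVC E0 /addV /zV /= add0r; case: (w).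
case E2: (addV w w') nz => [y d] nz.
have [v0 Hv0] : exists v0, L (y, d) v0 = 1.
  case: (eqVneq y 0) => [y0|yn0].
    exists (0, true); move: nz; rewrite y0 /L /zV /= mul0r Tr0 add0r mul1r.
    by case: d E2 => _ //; rewrite eqxx.
  exists (y^-1, false); by rewrite /L /= mulVf // Tr1 mul0r addr0.
by rewrite (orth (v0 := v0)) ?mulr0 // => v; [exact: bitL | exact: LpolarP].
Qed.

Lemma O2 l mu w w' : l != mu ->
  (\sum_v U l w v * U mu w' v) ^+ 2 = (#|{: V}|%:R)^-1.
Proof.
move=> lmu.
pose f v := Q l v + L w v + (Q mu v + L w' v).
have E : forall v, U l w v * U mu w' v = cc * cc * chi (f v).
  by move=> v; rewrite /U mulrACA -chiD ?bitQL.
rewrite (eq_bigr _ (fun v _ => E v)) -mulr_sumr exprMn.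
rewrite (@gauss f (fun v u => Bq l v u + Bq mu v u)).
- have H : #|{: V}|%:R != 0 :> RR by rewrite pnatr_eq0 -lt0n; apply/card_gt0P; exists zV.
  have ccN : cc * cc = (#|{: V}|%:R)^-1 by apply: (mulIf H); rewrite cc2 mulVf.
  by rewrite expr2 -mulrA cc2 mulr1 ccN.
- by move=> v; rewrite /f; apply: bitD; exact: bitQL.
- by move=> v u; apply: bitD; exact: bitBq.
- move=> v u; rewrite /f !QpolarP !LpolarP; ring.
- by move=> v v' u; rewrite !BqD; ring.
- by move=> v; rewrite !Bqz addr0.
- by rewrite /f !QzV !LzV !addr0.
- move=> u uz.
  case: (boolP [exists v0, Bq l v0 u + Bq mu v0 u == 1]) => [/existsP [v0 /eqP Hv]|/existsPn Hn].
    by exists v0.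
  exfalso; move/eqP: uz; apply; apply: (radical lmu) => v.
  have := Hn v; case/bitP: (bitD (bitBq l v u) (bitBq mu v u)) => -> //.
  by rewrite eqxx.
Qed.

Definition ev k : V := nth zV (enum {: V}) k.
Definition ef k : F := nth 0 (enum {: F}) k.
Local Notation NV := #|{: V}|.

Lemma sum_ev (G : V -> RR) : \sum_(k < NV) G (ev k) = \sum_v G v.
Proof.
rewrite -(big_mkord xpredT (fun k => G (ev k))) /ev cardE -(big_nth zV (fun=> true) G).
by rewrite big_enum.
Qed.

Lemma ev_inj j j' : (j < NV)%N -> (j' < NV)%N -> (ev j == ev j') = (j == j').
Proof. by move=> Hj Hj'; rewrite /ev nth_uniq ?enum_uniq // -cardE. Qed.
Lemma ef_inj j j' : (j < #|F|)%N -> (j' < #|F|)%N -> (ef j == ef j') = (j == j').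
Proof. by move=> Hj Hj'; rewrite /ef nth_uniq ?enum_uniq // -cardE. Qed.

Lemma dirac2 (a b : V) : \sum_v (v == a)%:R * (v == b)%:R = (a == b)%:R :> RR.
Proof.
rewrite (bigD1 a) //= big1 ?addr0 ?eqxx ?mul1r // => v va.
by rewrite (negbTE va) mul0r.
Qed.
Lemma dirac1 (a : V) (G : V -> RR) : \sum_v (v == a)%:R * G v = G a.
Proof.
rewrite (bigD1 a) //= big1 ?addr0 ?eqxx ?mul1r // => v va.
by rewrite (negbTE va) mul0r.
Qed.

Definition Bw b j (v : V) : RR :=
  if b == 0%N then (v == ev j)%:R else U (ef b.-1) (ev j) v.
Definition Bv b j k : RR := Bw b j (ev k).

Lemma R1 b j j' : (b < #|F|.+1)%N -> (j < NV)%N -> (j' < NV)%N ->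
  \sum_(k < NV) Bv b j k * Bv b j' k = (j == j')%:R.
Proof.
move=> Hb Hj Hj'.
have -> : \sum_(k < NV) Bv b j k * Bv b j' k = \sum_v Bw b j v * Bw b j' v.
  exact: (sum_ev (fun v => Bw b j v * Bw b j' v)).
rewrite /Bw; case: eqP => _; first by rewrite dirac2 ev_inj.
by rewrite O1 ev_inj.
Qed.

Lemma Usq l w v : U l w v ^+ 2 = (NV%:R)^-1.
Proof.
have H : NV%:R != 0 :> RR by rewrite pnatr_eq0 -lt0n; apply/card_gt0P; exists zV.
rewrite /U exprMn; have -> : chi (Q l v + L w v) ^+ 2 = 1.
  by rewrite /chi; case: eqP; rewrite ?expr1n // sqrrN expr1n.
by rewrite mulr1 expr2; apply: (mulIf H); rewrite cc2 mulVf.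
Qed.

Lemma R2 b b' j j' : (b < #|F|.+1)%N -> (b' < #|F|.+1)%N -> b != b' ->
  (j < NV)%N -> (j' < NV)%N ->
  (\sum_(k < NV) Bv b j k * Bv b' j' k) ^+ 2 = (NV%:R)^-1.
Proof.
move=> Hb Hb' bb Hj Hj'.
have -> : \sum_(k < NV) Bv b j k * Bv b' j' k = \sum_v Bw b j v * Bw b' j' v.
  exact: (sum_ev (fun v => Bw b j v * Bw b' j' v)).
rewrite /Bw; case: eqP => [b0|bn0]; case: eqP => [b0'|bn0'].
- by move: bb; rewrite b0 b0'.
- by rewrite dirac1 Usq.
- by under eq_bigr => v _ do rewrite mulrC; rewrite dirac1 Usq.
- apply: O2; rewrite /ef; apply: contra bb => /eqP E; apply/eqP.
  have := ef_inj (j := b.-1) (j' := b'.-1); rewrite /ef E eqxx.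
  move=> /(_ _ _)/esym/eqP; lia.
Qed.

End Kerdock.

Lemma expn_pow a b : expn a b = Nat.pow a b.
Proof. by elim: b => [|b IH] //; rewrite expnS IH. Qed.

Lemma inner_sum n x y : inner n x y = \sum_(k < n) x k * y k.
Proof. elim: n => [|n IH]; first by rewrite big_ord0. by rewrite big_ord_recr /= IH. Qed.

Lemma mub_inner (s : nat) : Nat.lt 0 s ->
  exists Bv : nat -> nat -> nat -> Rdefinitions.R,
  (forall b j, Nat.lt b (S (Nat.pow 2 (Nat.pred (Nat.add s s)))) -> Nat.lt j (Nat.pow 4 s) ->
     inner (Nat.pow 4 s) (Bv b j) (Bv b j) = IZR (Zpos xH)) /\
  (forall b j j', Nat.lt b (S (Nat.pow 2 (Nat.pred (Nat.add s s)))) -> Nat.lt j (Nat.pow 4 s) ->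
     Nat.lt j' (Nat.pow 4 s) -> j <> j' -> inner (Nat.pow 4 s) (Bv b j) (Bv b j') = IZR Z0) /\
  (forall b b' j j', Nat.lt b (S (Nat.pow 2 (Nat.pred (Nat.add s s)))) ->
     Nat.lt b' (S (Nat.pow 2 (Nat.pred (Nat.add s s)))) -> b <> b' ->
     Nat.lt j (Nat.pow 4 s) -> Nat.lt j' (Nat.pow 4 s) ->
     inner (Nat.pow 4 s) (Bv b j) (Bv b' j') * inner (Nat.pow 4 s) (Bv b j) (Bv b' j')
       = Rinv (INR (Nat.pow 4 s))).
Proof.
move=> /ssrnat.ltP s0; set h := s.-1.
have [F charF cardF] := @pPrimePowerField 2 h.*2.+1 (isT : prime 2) (ltn0Sn _).
have NVe : #|{: F * bool}| = Nat.pow 4 s.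
  by rewrite (cardV charF cardF) -expnMn /h prednK // expn_pow.
have KFe : #|F|.+1 = S (Nat.pow 2 (Nat.pred (Nat.add s s))).
  have E : (h.*2.+1 = Nat.pred (Nat.add s s))%N by rewrite /h; move: s0; clear; lia.
  by rewrite cardF E expn_pow.
exists (@Bv F h); split; [|split].
- move=> b j /ssrnat.ltP Hb /ssrnat.ltP Hj; rewrite inner_sum -NVe (R1 charF cardF) ?eqxx //.
  + by rewrite KFe.
  + by rewrite NVe.
  + by rewrite NVe.
- move=> b j j' /ssrnat.ltP Hb /ssrnat.ltP Hj /ssrnat.ltP Hj' jj; rewrite inner_sum -NVe (R1 charF cardF) //.
  + by move/eqP: jj => /negbTE ->.
  + by rewrite KFe.
  + by rewrite NVe.
  + by rewrite NVe.
- move=> b b' j j' /ssrnat.ltP Hb /ssrnat.ltP Hb' bb /ssrnat.ltP Hj /ssrnat.ltP Hj'.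
  rewrite inner_sum -NVe -expr2 (R2 charF cardF).
  + by rewrite INRE.
  + by rewrite KFe.
  + by rewrite KFe.
  + by apply/eqP.
  + by rewrite NVe.
  + by rewrite NVe.
Qed.

End MC.

Lemma inner_ext n x x' y y' :
  (forall k, (k < n)%nat -> x k = x' k) -> (forall k, (k < n)%nat -> y k = y' k) ->
  inner n x y = inner n x' y'.
Proof.
induction n as [|n IH]; intros Hx Hy; simpl; [reflexivity|].
rewrite IH by (intros; apply Hx || apply Hy; lia).
rewrite (Hx n), (Hy n) by lia; reflexivity.
Qed.

Lemma inner_opp n x y : inner n x (fun k => - y k) = - inner n x y.
Proof. induction n as [|n IH]; simpl; [ring|]. rewrite IH; ring. Qed.

Lemma inner_scale n c d x y :
  inner n (fun k => c * x k) (fun k => d * y k) = c * d * inner n x y.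
Proof. induction n as [|n IH]; simpl; [ring|]. rewrite IH; ring. Qed.

Lemma inner_split a c x y :
  inner (a + c) x y = inner a x y + inner c (fun k => x (a + k)%nat) (fun k => y (a + k)%nat).
Proof.
induction c as [|c IH]; simpl.
- rewrite Nat.add_0_r; ring.
- rewrite Nat.add_succ_r; simpl; rewrite IH; ring.
Qed.

Lemma inner_tail a n x y : (a <= n)%nat -> (forall k, (a <= k)%nat -> x k = 0) ->
  inner n x y = inner a x y.
Proof.
intros Han Hx. replace n with (a + (n - a))%nat by lia.
rewrite inner_split.
assert (inner (n - a) (fun k => x (a + k)%nat) (fun k => y (a + k)%nat) = 0) as ->.
{ generalize (n - a)%nat as c; induction c as [|c IH]; simpl; [reflexivity|].
  rewrite IH, Hx by lia; ring. }
ring.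
Qed.

Lemma inner_delta_l n b c y :
  inner n (fun k => if Nat.eqb k b then c else 0) y = if Nat.ltb b n then c * y b else 0.
Proof.
induction n as [|n IH]; simpl; [reflexivity|].
rewrite IH.
destruct (Nat.eqb_spec n b) as [E|E]; destruct (Nat.ltb_spec b n) as [L|L];
  destruct (Nat.ltb_spec b (S n)) as [L'|L']; try lia; subst; ring.
Qed.

Lemma inner_delta n b b' c d : (b < n)%nat ->
  inner n (fun k => if Nat.eqb k b then c else 0) (fun k => if Nat.eqb k b' then d else 0)
  = if Nat.eqb b b' then c * d else 0.
Proof.
intros Hb; rewrite inner_delta_l.
destruct (Nat.ltb_spec b n); [|lia].
destruct (Nat.eqb b b'); ring.
Qed.

Lemma inner_opp_l n x y : inner n (fun k => - x k) y = - inner n x y.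
Proof. induction n as [|n IH]; simpl; [ring|]. rewrite IH; ring. Qed.

Lemma div_facts N K i : (0 < N)%nat -> (i < K * N)%nat ->
  (i / N < K)%nat /\ (i mod N < N)%nat /\ i = (N * (i / N) + i mod N)%nat.
Proof.
intros HN Hi; split; [|split].
- apply Nat.Div0.div_lt_upper_bound; lia.
- apply Nat.mod_upper_bound; lia.
- apply Nat.div_mod; lia.
Qed.

Lemma core (s K n : nat) : (0 < s)%nat -> (1 <= K)%nat ->
  (K <= S (Nat.pow 2 (Nat.pred (s + s))))%nat -> (Nat.pow 4 s + K <= n)%nat ->
  exists v, equiangular_lines n (K * Nat.pow 4 s) v.
Proof.
intros Hs HK1 HK2 Hn.
destruct (MC.mub_inner Hs) as [Bv [H1 [H2 H3]]].
set (N := Nat.pow 4 s) in *.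
assert (HN : (0 < N)%nat) by (unfold N; apply Nat.neq_0_lt_0, Nat.pow_nonzero; lia).
assert (HNR : 0 < INR N) by (apply lt_0_INR; lia).
set (g := sqrt (/ INR N)).
assert (Hg : 0 < g) by (apply sqrt_lt_R0, Rinv_0_lt_compat; lra).
assert (Hgg : g * g = / INR N) by (apply sqrt_sqrt; left; apply Rinv_0_lt_compat; lra).
set (c1 := sqrt (g / (1 + g))).
set (c2 := sqrt (/ (1 + g))).
assert (Hc1 : c1 * c1 = g / (1 + g)).
{ apply sqrt_sqrt. apply Rlt_le, Rdiv_lt_0_compat; lra. }
assert (Hc2 : c2 * c2 = / (1 + g)).
{ apply sqrt_sqrt. apply Rlt_le, Rinv_0_lt_compat; lra. }
set (vec := fun i k => if Nat.ltb k N then c2 * Bv (i / N)%nat (i mod N)%nat k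
                       else if Nat.eqb k (N + i / N)%nat then c1 else 0).
assert (Key : forall i i', (i < K * N)%nat -> (i' < K * N)%nat ->
  inner n (vec i) (vec i') = c2 * c2 * inner N (Bv (i / N)%nat (i mod N)%nat) (Bv (i' / N)%nat (i' mod N)%nat)
     + (if Nat.eqb (i / N) (i' / N) then c1 * c1 else 0)).
{ intros i i' Hi Hi'.
  destruct (div_facts N K i HN Hi) as [Hb [Hj Hij]].
  destruct (div_facts N K i' HN Hi') as [Hb' [Hj' Hij']].
  rewrite (inner_tail (N + K)); [| lia |].
  2:{ intros k Hk; unfold vec. destruct (Nat.ltb_spec k N); [lia|].
      destruct (Nat.eqb_spec k (N + i / N)); [lia|reflexivity]. }
  rewrite inner_split. f_equal.
  - rewrite <- inner_scale. apply inner_ext; intros k Hk; unfold vec;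
      destruct (Nat.ltb_spec k N); try lia; reflexivity.
  - rewrite <- (inner_delta K (i / N) (i' / N) c1 c1) by lia.
    apply inner_ext; intros k Hk; unfold vec;
      destruct (Nat.ltb_spec (N + k) N); try lia;
      destruct (Nat.eqb_spec (N + k) (N + i / N)); destruct (Nat.eqb_spec k (i / N)); try lia;
      try reflexivity;
      destruct (Nat.eqb_spec (N + k) (N + i' / N)); destruct (Nat.eqb_spec k (i' / N)); try lia;
      reflexivity. }
assert (Cross : forall i i', (i < K * N)%nat -> (i' < K * N)%nat -> i <> i' ->
  Rabs (inner n (vec i) (vec i')) = g / (1 + g)).
{ intros i i' Hi Hi' Hii.
  destruct (div_facts N K i HN Hi) as [Hb [Hj Hij]].
  destruct (div_facts N K i' HN Hi') as [Hb' [Hj' Hij']].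
  rewrite Key by assumption.
  destruct (Nat.eqb_spec (i / N) (i' / N)) as [E|E].
  - rewrite E, H2; try lia.
    + rewrite Rmult_0_r, Rplus_0_l, Hc1. apply Rabs_right.
      apply Rle_ge, Rlt_le, Rdiv_lt_0_compat; lra.
  - set (x := inner N (Bv (i / N)%nat (i mod N)%nat) (Bv (i' / N)%nat (i' mod N)%nat)).
    assert (Hx : x * x = g * g) by (rewrite Hgg; unfold x; apply H3; try assumption; lia).
    assert (Hax : Rabs x = g).
    { rewrite <- (sqrt_Rsqr (Rabs x)) by apply Rabs_pos.
      unfold Rsqr; rewrite <- Rabs_mult, Hx, Rabs_right by nra.
      apply sqrt_square; lra. }
    rewrite Rplus_0_r, Rabs_mult, Hax, Hc2, Rabs_right.
    + field; lra.
    + apply Rle_ge, Rlt_le, Rinv_0_lt_compat; lra. }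
assert (Unit : forall i, (i < K * N)%nat -> inner n (vec i) (vec i) = 1).
{ intros i Hi. destruct (div_facts N K i HN Hi) as [Hb [Hj Hij]].
  rewrite Key, H1, Nat.eqb_refl, Hc1, Hc2 by (try assumption; lia). field; lra. }
assert (Hlt : g / (1 + g) < 1).
{ apply (Rmult_lt_reg_r (1 + g)); [lra|]. unfold Rdiv; rewrite Rmult_assoc, Rinv_l; lra. }
exists vec; split; [exact Unit|split].
- intros i j Hi Hj Hij; split.
  + intros Hv. assert (E : inner n (vec i) (vec j) = inner n (vec j) (vec j))
      by (apply inner_ext; [exact Hv|reflexivity]).
    pose proof (Cross i j Hi Hj Hij) as C. rewrite E, Unit, Rabs_R1 in C by assumption. lra.
  + intros Hv. assert (E : inner n (vec i) (vec j) = inner n (fun k => - vec j k) (vec j))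
      by (apply inner_ext; [exact Hv|reflexivity]).
    pose proof (Cross i j Hi Hj Hij) as C.
    rewrite E, inner_opp_l, Unit, Rabs_Ropp, Rabs_R1 in C by assumption. lra.
- exists (g / (1 + g)). exact Cross.
Qed.

Lemma arith_partial (n M : R) : 2 <= M -> 33 * M + 1 <= n -> n <= 48 * M + 1 ->
  1089 * (32 * M * (n - 32 * M)) >= 8 * n * (4 * n + 33).
Proof.
intros H1 H2 H3.
assert (0 <= (n - 33 * M - 1) * (48 * M + 1 - n)) by (apply Rmult_le_pos; lra).
assert (0 <= (n - 33 * M - 1) * (M - 2)) by (apply Rmult_le_pos; lra).
nra.
Qed.

Lemma arith_full (n M : R) : 0 <= M -> 0 <= n -> n <= 132 * M ->
  1089 * ((16 * M + 1) * (32 * M)) >= 8 * n * (4 * n + 33).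
Proof.
intros H1 H2 H3.
assert (0 <= (132 * M - n) * (132 * M + n)) by (apply Rmult_le_pos; lra).
nra.
Qed.

Lemma find_t n : (66 < n)%nat -> exists t, (66 * Nat.pow 4 t < n <= 264 * Nat.pow 4 t)%nat.
Proof.
intros Hn.
assert (G : forall k, (n <= 264 * Nat.pow 4 k)%nat -> exists t, (66 * Nat.pow 4 t < n <= 264 * Nat.pow 4 t)%nat).
{ induction k as [|k IH]; intros Hk.
  - exists 0%nat; simpl in *; lia.
  - destruct (Nat.le_gt_cases n (264 * Nat.pow 4 k)) as [L|L].
    + apply IH; exact L.
    + exists (S k); simpl in *; lia. }
apply (G n). pose proof (Nat.pow_gt_lin_r 4 n) as P. lia.
Qed.

Lemma basis_case n : (1 <= n)%nat -> exists v, equiangular_lines n n v.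
Proof.
intros Hn. exists (fun i k => if Nat.eqb k i then 1 else 0).
assert (D : forall i j, (i < n)%nat -> inner n (fun k => if Nat.eqb k i then 1 else 0) (fun k => if Nat.eqb k j then 1 else 0) = if Nat.eqb i j then 1 else 0).
{ intros i j Hi; rewrite inner_delta by exact Hi. destruct (Nat.eqb i j); ring. }
split; [|split].
- intros i Hi; rewrite D, Nat.eqb_refl by exact Hi; reflexivity.
- intros i j Hi Hj Hij; assert (E0 : Nat.eqb i j = false) by (apply Nat.eqb_neq; exact Hij).
  split; intros Hv.
  + assert (E : inner n (fun k => if Nat.eqb k i then 1 else 0) (fun k => if Nat.eqb k j then 1 else 0)
              = inner n (fun k => if Nat.eqb k j then 1 else 0) (fun k => if Nat.eqb k j then 1 else 0))
      by (apply inner_ext; [exact Hv|reflexivity]).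
    rewrite D, D, Nat.eqb_refl, E0 in E by assumption. lra.
  + assert (E : inner n (fun k => if Nat.eqb k i then 1 else 0) (fun k => if Nat.eqb k j then 1 else 0)
              = inner n (fun k => - (if Nat.eqb k j then 1 else 0)) (fun k => if Nat.eqb k j then 1 else 0))
      by (apply inner_ext; [exact Hv|reflexivity]).
    rewrite inner_opp_l, D, D, Nat.eqb_refl, E0 in E by assumption. lra.
- exists 0; intros i j Hi Hj Hij.
  rewrite D, (proj2 (Nat.eqb_neq i j) Hij) by exact Hi. apply Rabs_R0.
Qed.

Theorem corollary2 (n : nat) (hn : (1 <= n)%nat) :
  exists (r : nat) (v : nat -> nat -> R),
    equiangular_lines n r v /\
    INR r >= (8 / 1089) * INR n * (4 * INR n + 33).
Proof.
assert (Goal : forall r : nat, 1089 * INR r >= 8 * INR n * (4 * INR n + 33) ->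
  INR r >= (8 / 1089) * INR n * (4 * INR n + 33)) by (intros; lra).
destruct (Nat.le_gt_cases n 25) as [Hs|Hs].
{ destruct (basis_case n hn) as [v Hv]. exists n, v; split; [exact Hv|].
  apply Goal. assert (INR n <= 25) by (replace 25 with (INR 25) by (simpl; ring); apply le_INR; exact Hs).
  assert (0 <= INR n) by apply pos_INR. nra. }
destruct (Nat.le_gt_cases n 66) as [Hm|Hm].
{ destruct (core 2 9 n) as [v Hv]; try (simpl; lia).
  exists (9 * Nat.pow 4 2)%nat, v; split; [exact Hv|].
  apply Goal. replace (INR (9 * Nat.pow 4 2)) with 144 by (simpl; ring).
  assert (INR n <= 66) by (replace 66 with (INR 66) by (simpl; ring); apply le_INR; exact Hm).
  assert (0 <= INR n) by apply pos_INR. nra. }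
destruct (find_t n Hm) as [t [Ht1 Ht2]].
set (M := (2 * Nat.pow 4 t)%nat).
assert (HN : Nat.pow 4 (t + 3) = (32 * M)%nat).
{ unfold M. rewrite Nat.pow_add_r. simpl. lia. }
assert (HK : Nat.pow 2 (Nat.pred ((t + 3) + (t + 3))) = (16 * M)%nat).
{ unfold M. replace (Nat.pred ((t + 3) + (t + 3))) with (2 * t + 5)%nat by lia.
  rewrite Nat.pow_add_r, Nat.pow_mul_r. simpl. lia. }
assert (HM : (2 <= M)%nat) by (unfold M; pose proof (Nat.pow_nonzero 4 t); lia).
assert (HMR : 2 <= INR M) by (replace 2 with (INR 2) by (simpl; ring); apply le_INR; exact HM).
destruct (Nat.le_gt_cases n (48 * M + 1)) as [Hp|Hp].
- destruct (core (t + 3) (n - 32 * M) n) as [v Hv]; try rewrite HK; try rewrite HN; try lia.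
  exists ((n - 32 * M) * Nat.pow 4 (t + 3))%nat, v; split; [exact Hv|].
  apply Goal. rewrite HN.
  assert (EI : INR ((n - 32 * M) * (32 * M)) = 32 * INR M * (INR n - 32 * INR M)).
  { rewrite mult_INR, minus_INR by lia. rewrite !mult_INR. simpl. ring. }
  rewrite EI. apply arith_partial.
  + exact HMR.
  + assert (33 * M + 1 <= n)%nat by (unfold M in *; lia).
    replace (33 * INR M + 1) with (INR (33 * M + 1)) by (rewrite plus_INR, mult_INR; simpl; ring).
    apply le_INR; assumption.
  + replace (48 * INR M + 1) with (INR (48 * M + 1)) by (rewrite plus_INR, mult_INR; simpl; ring).
    apply le_INR; assumption.
- destruct (core (t + 3) (16 * M + 1) n) as [v Hv]; try rewrite HK; try rewrite HN; try lia.
  exists ((16 * M + 1) * Nat.pow 4 (t + 3))%nat, v; split; [exact Hv|].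
  apply Goal. rewrite HN.
  assert (EI : INR ((16 * M + 1) * (32 * M)) = (16 * INR M + 1) * (32 * INR M)).
  { rewrite mult_INR, plus_INR, !mult_INR. simpl. ring. }
  rewrite EI. apply arith_full.
  + apply pos_INR.
  + apply pos_INR.
  + replace (132 * INR M) with (INR (132 * M)) by (rewrite mult_INR; simpl; ring).
    apply le_INR; unfold M in *; lia.
Qed.
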